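(* Let $H$ be a cocommutative pointed Majid algebra over a field $k$ whose quiver $Q$ is connected (equivalently, $H$ is link-indecomposable). Then $Q$ has exactly one vertex (so $Q$ is a multi-loop quiver, all arrows being loops at that vertex) and hence $H$ is connected, i.e. its coradical is $k1_H$.
   Context: A Majid algebra (dual quasi-Hopf algebra) over $k$ is a coalgebra $(H,\Delta,\varepsilon)$ together with coalgebra maps $\mathrm{M}:H\otimes H\to H$ and $\mu:k\to H$, a convolution-invertible reassociator $\Phi:H^{\otimes3}\to k$, a coalgebra antimorphism $\mathcal S$ and functionals $\alpha,\beta$ satisfying the dual quasi-Hopf axioms: $a_1(b_1c_1)\Phi(a_2,b_2,c_2)=\Phi(a_1,b_1,c_1)(a_2b_2)c_2$; $1_Ha=a=a1_H$; $\Phi(a_1,b_1,c_1d_1)\Phi(a_2b_2,c_2,d_2)=\Phi(b_1,c_1,d_1)\Phi(a_1,b_2c_2,d_2)\Phi(a_2,b_3,c_3)$; $\Phi(a,1_H,b)=\varepsilon(a)\varepsilon(b)$; $\mathcal S(a_1)\alpha(a_2)a_3=\alpha(a)1_H$, $a_1\beta(a_2)\mathcal S(a_3)=\beta(a)1_H$; $\Phi(a_1,\mathcal S(a_3),a_5)\beta(a_2)\alpha(a_4)=\Phi^{-1}(\mathcal S(a_1),a_3,\mathcal S(a_5))\alpha(a_2)\beta(a_4)=\varepsilon(a)$. $H$ is pointed if all simple subcoalgebras are one-dimensional, and cocommutative if $\Delta=\Delta^{op}$. The quiver of a pointed coalgebra $C$ has vertex set the group-likes $G(C)$ and $\dim_k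 P_{g,h}(C)/k(g-h)$ arrows from $h$ to $g$, where $P_{g,h}(C)=\{x\in C:\Delta(x)=g\otimes x+x\otimes h\}$. *)

(* Defs.v *)
(* Majid algebras (dual quasi-Hopf algebras) over a field k,
   possibly infinite-dimensional, encoded without a tensor-product library:
   an element of H (x) H is a finite list of pairs (sum of simple tensors);
   two such lists are equal as tensors iff every bilinear form takes the same
   value on them (valid over a field).  Sweedler sums are sums over these lists;
   all expressions we form are multilinear in the tensor legs, hence
   independent of the chosen representative. *)
From HB Require Import structures.
From mathcomp Require Import all_boot all_order all_algebra.
From Stdlib Require Import Relations.
Set Implicit Arguments. Unset Strict Implicit. Unset Printing Implicit Defensive.
Import Order.TTheory GRing.Theory Num.Theory.
Local Open Scope ring_scope.

Section Majid.
Context {k : fieldType} {H : lmodType k}.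

Definition lin_form (f : H -> k) := forall c x y, f (c *: x + y) = c * f x + f y.
Definition lin_map (f : H -> H) := forall c x y, f (c *: x + y) = c *: f x + f y.
Definition bilin_form (f : H -> H -> k) :=
  (forall c x y z, f (c *: x + y) z = c * f x z + f y z) /\
  (forall c x y z, f z (c *: x + y) = c * f z x + f z y).
Definition bilin_map (f : H -> H -> H) :=
  (forall c x y z, f (c *: x + y) z = c *: f x z + f y z) /\
  (forall c x y z, f z (c *: x + y) = c *: f z x + f z y).
Definition trilin_form (f : H -> H -> H -> k) :=
  (forall c x y z w, f (c *: x + y) z w = c * f x z w + f y z w) /\
  (forall c x y z w, f z (c *: x + y) w = c * f z x w + f z y w) /\
  (forall c x y z w, f z w (c *: x + y) = c * f z w x + f z w y).

Definition teq2 (s t : seq (H * H)) :=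
  forall f, bilin_form f -> \sum_(p <- s) f p.1 p.2 = \sum_(p <- t) f p.1 p.2.

Variable Delta : H -> seq (H * H).

Definition sw2 {V : nmodType} (a : H) (F : H -> H -> V) : V :=
  \sum_(p <- Delta a) F p.1 p.2.
Definition sw3 {V : nmodType} (a : H) (F : H -> H -> H -> V) : V :=
  \sum_(p <- Delta a) \sum_(q <- Delta p.2) F p.1 q.1 q.2.
Definition sw5 {V : nmodType} (a : H) (F : H -> H -> H -> H -> H -> V) : V :=
  \sum_(p <- Delta a) \sum_(q <- Delta p.2) \sum_(r <- Delta q.2)
    \sum_(s <- Delta r.2) F p.1 q.1 r.1 s.1 s.2.

Record majid_algebra (eps : H -> k) (M : H -> H -> H) (one : H)
    (Phi Phiinv : H -> H -> H -> k) (S : H -> H) (alpha beta : H -> k) : Prop := {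
  Delta_lin : forall f, bilin_form f -> forall c x y,
      sw2 (c *: x + y) f = c * sw2 x f + sw2 y f;
  eps_lin : lin_form eps;
  coassoc : forall f, trilin_form f -> forall a,
      \sum_(p <- Delta a) \sum_(q <- Delta p.1) f q.1 q.2 p.2 = sw3 a f;
  counit_l : forall a, sw2 a (fun x y => eps x *: y) = a;
  counit_r : forall a, sw2 a (fun x y => eps y *: x) = a;
  M_bilin : bilin_map M;
  M_Delta : forall f, bilin_form f -> forall a b,
      sw2 (M a b) f = sw2 a (fun a1 a2 => sw2 b (fun b1 b2 => f (M a1 b1) (M a2 b2)));
  M_eps : forall a b, eps (M a b) = eps a * eps b;
  one_Delta : teq2 (Delta one) [:: (one, one)];
  one_eps : eps one = 1;
  Phi_trilin : trilin_form Phi;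
  Phiinv_trilin : trilin_form Phiinv;
  Phi_inv_r : forall a b c,
      sw2 a (fun a1 a2 => sw2 b (fun b1 b2 => sw2 c (fun c1 c2 =>
        Phi a1 b1 c1 * Phiinv a2 b2 c2))) = eps a * eps b * eps c;
  Phi_inv_l : forall a b c,
      sw2 a (fun a1 a2 => sw2 b (fun b1 b2 => sw2 c (fun c1 c2 =>
        Phiinv a1 b1 c1 * Phi a2 b2 c2))) = eps a * eps b * eps c;
  S_lin : lin_map S;
  S_Delta : forall a, forall f, bilin_form f ->
      sw2 (S a) f = sw2 a (fun a1 a2 => f (S a2) (S a1));
  S_eps : forall a, eps (S a) = eps a;
  alpha_lin : lin_form alpha;
  beta_lin : lin_form beta;
  quasi_assoc : forall a b c,
      sw2 a (fun a1 a2 => sw2 b (fun b1 b2 => sw2 c (fun c1 c2 =>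
        Phi a2 b2 c2 *: M a1 (M b1 c1)))) =
      sw2 a (fun a1 a2 => sw2 b (fun b1 b2 => sw2 c (fun c1 c2 =>
        Phi a1 b1 c1 *: M (M a2 b2) c2)));
  unit_l : forall a, M one a = a;
  unit_r : forall a, M a one = a;
  cocycle : forall a b c d,
      sw2 a (fun a1 a2 => sw2 b (fun b1 b2 => sw2 c (fun c1 c2 => sw2 d (fun d1 d2 =>
        Phi a1 b1 (M c1 d1) * Phi (M a2 b2) c2 d2)))) =
      sw2 a (fun a1 a2 => sw3 b (fun b1 b2 b3 => sw3 c (fun c1 c2 c3 => sw2 d (fun d1 d2 =>
        Phi b1 c1 d1 * Phi a1 (M b2 c2) d2 * Phi a2 b3 c3))));
  Phi_normal : forall a b, Phi a one b = eps a * eps b;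
  antipode_alpha : forall a,
      sw3 a (fun a1 a2 a3 => alpha a2 *: M (S a1) a3) = alpha a *: one;
  antipode_beta : forall a,
      sw3 a (fun a1 a2 a3 => beta a2 *: M a1 (S a3)) = beta a *: one;
  antipode_Phi : forall a,
      sw5 a (fun a1 a2 a3 a4 a5 => Phi a1 (S a3) a5 * beta a2 * alpha a4) = eps a;
  antipode_Phiinv : forall a,
      sw5 a (fun a1 a2 a3 a4 a5 => Phiinv (S a1) a3 (S a5) * alpha a2 * beta a4) = eps a
}.

Definition cocommutative :=
  forall a f, bilin_form f -> sw2 a f = sw2 a (fun x y => f y x).

Definition subspace (C : H -> Prop) :=
  C 0 /\ forall c x y, C x -> C y -> C (c *: x + y).
Definition subcoalgebra (C : H -> Prop) :=
  subspace C /\ forall x, C x ->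
    exists s : seq (H * H), (forall p, p \in s -> C p.1 /\ C p.2) /\ teq2 (Delta x) s.
Definition simple_subcoalgebra (C : H -> Prop) :=
  subcoalgebra C /\ (exists x, C x /\ x <> 0) /\
  forall D : H -> Prop, subcoalgebra D -> (forall x, D x -> C x) ->
    (forall x, D x -> x = 0) \/ (forall x, C x -> D x).
Definition one_dimensional (C : H -> Prop) :=
  exists g, g <> 0 /\ forall x, C x <-> exists c : k, x = c *: g.
Definition pointed := forall C, simple_subcoalgebra C -> one_dimensional C.

Definition coradical (x : H) :=
  exists s : seq H, (forall y, y \in s -> exists C, simple_subcoalgebra C /\ C y) /\
    x = \sum_(y <- s) y.

Definition grouplike (eps : H -> k) (g : H) := teq2 (Delta g) [:: (g, g)] /\ eps g = 1.
Definition skew_prim (g h x : H) := teq2 (Delta x) [:: (g, x); (x, h)].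
(* there is at least one arrow from h to g in the quiver:
   dim P_{g,h} / k(g - h) > 0 *)
Definition has_arrow (eps : H -> k) (g h : H) :=
  grouplike eps g /\ grouplike eps h /\
  exists x, skew_prim g h x /\ ~ (exists c : k, x = c *: (g - h)).
Definition quiver_connected (eps : H -> k) :=
  forall g h, grouplike eps g -> grouplike eps h ->
    clos_refl_sym_trans H (has_arrow eps) g h.

End Majid.

(* Main.v *)
Require Import Defs.
From HB Require Import structures.
From mathcomp Require Import all_boot all_order all_algebra.
From Stdlib Require Import Classical ClassicalEpsilon FunctionalExtensionality PropExtensionality Relations.
Import Order.TTheory GRing.Theory Num.Theory.

Set Implicit Arguments.
Section Zorn.
Variable T : Type.
Variable R : T -> T -> Prop.
Hypothesis Rrefl : forall x, R x x.
Hypothesis Rtrans : forall x y z, R x y -> R y z -> R x z.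
Definition is_chain (C : T -> Prop) := forall x y, C x -> C y -> R x y \/ R y x.

Section Tower.
Variable F : (T -> Prop) -> T.
Hypothesis FP : forall C, is_chain C -> forall c, C c -> R c (F C) /\ ~ R (F C) c.
Definition gS (C : T -> Prop) := fun x => C x \/ x = F C.
Inductive Tw : (T -> Prop) -> Prop :=
 | Tsucc C : Tw C -> Tw (gS C)
 | Tunion (S : (T -> Prop) -> Prop) : (forall C, S C -> Tw C) -> Tw (fun x => exists C, S C /\ C x).
Definition sub (A B : T -> Prop) := forall x, A x -> B x.
Definition extreme A := forall B, Tw B -> sub B A -> ~ sub A B -> sub (gS B) A.

Lemma set_ext A B : sub A B -> sub B A -> A = B.
Proof. move=> h1 h2; apply: functional_extensionality => x.
apply: propositional_extensionality; split; [exact: h1|exact: h2]. Qed.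

Lemma l1 A : Tw A -> extreme A -> forall B, Tw B -> sub B A \/ sub (gS A) B.
Proof.
move=> HA eA B HB; elim: HB => [C HC IH | S HS IH].
- case: IH => [HCA|HgAC].
  + case: (classic (sub A C)) => HAC.
    * have E := set_ext HCA HAC; rewrite E; right => x; exact.
    * left; exact: eA C HC HCA HAC.
  + right => x /HgAC Hx; left; exact Hx.
- case: (classic (exists C, S C /\ sub (gS A) C)) => [[C [SC HC]]|Hn].
  + right => x /HC Hx; exists C; split => //.
  + left => x [C [SC Cx]]; case: (IH C SC) => h; first exact: h.
    exfalso; apply: Hn; exists C; split => //.
Qed.

Lemma l2 A : Tw A -> extreme A.
Proof.
elim=> [C HC IHC | S HS IH].
- move=> B HB Hsub Hnot; case: (l1 HC IHC HB) => [HBC|HgCB]; last by exfalso; apply: Hnot.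
  case: (classic (sub C B)) => HCB.
  + have E := set_ext HBC HCB; rewrite E => x; exact.
  + move=> x /(IHC B HB HBC HCB) Hx; left; exact Hx.
- move=> B HB Hsub Hnot.
  have [C [SC HCB]] : exists C, S C /\ ~ sub C B.
    apply: NNPP => Hn; apply: Hnot => x [C [SC Cx]].
    apply: NNPP => Hx; apply: Hn; exists C; split => // Hs; apply: Hx; exact: Hs.
  case: (l1 (HS C SC) (IH C SC) HB) => [HBC|HgCB].
  + move=> x /(IH C SC B HB HBC HCB) Hx; exists C; split => //.
  + by exfalso; apply: HCB => x Hx; apply: HgCB; left.
Qed.

Lemma Ttotal A B : Tw A -> Tw B -> sub A B \/ sub B A.
Proof.
move=> HA HB; case: (l1 HA (l2 HA) HB) => h; [right|left] => //.
move=> x Hx; apply: h; left; exact Hx.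
Qed.

Lemma Tchain C : Tw C -> is_chain C.
Proof.
elim=> [C0 HC IH | S HS IH].
- move=> x y [Hx|->] [Hy|->].
  + exact: IH.
  + left; exact: (proj1 (FP IH x Hx)).
  + right; exact: (proj1 (FP IH y Hy)).
  + left; exact: Rrefl.
- move=> x y [C1 [S1 C1x]] [C2 [S2 C2y]].
  case: (Ttotal (HS C1 S1) (HS C2 S2)) => h.
  + exact: IH C2 S2 x y (h x C1x) C2y.
  + exact: IH C1 S1 x y C1x (h y C2y).
Qed.

Lemma tower_false : False.
Proof.
pose U := fun x => exists C, Tw C /\ C x.
have TU : Tw U by apply: Tunion.
have cU := Tchain TU.
have TgU := Tsucc TU.
have UF : U (F U) by exists (gS U); split => //; right.
exact: (proj2 (FP cU _ UF)) (Rrefl _).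
Qed.
End Tower.

Hypothesis chain_ub : forall C, is_chain C -> exists u, forall c, C c -> R c u.

Lemma zorn : exists m, forall y, R m y -> R y m.
Proof.
apply: NNPP => Hno.
have Hstep : forall m, exists y, R m y /\ ~ R y m.
  move=> m; apply: NNPP => H1; apply: Hno; exists m => y Hy; apply: NNPP => Hyn.
  apply: H1; exists y; split => //.
have HF : forall C : T -> Prop, exists y, is_chain C -> forall c, C c -> R c y /\ ~ R y c.
  move=> C; case: (classic (is_chain C)) => HC.
  - have [u Hu] := chain_ub HC; have [y [Huy Hyu]] := Hstep u.
    exists y => _ c Hc; split; first exact: Rtrans (Hu c Hc) Huy.
    move=> Hyc; apply: Hyu; exact: Rtrans Hyc (Hu c Hc).
  - have [u _] := chain_ub (C := fun _ => False) (fun x y Hx => match Hx with end).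
    by exists u.
pose F C := proj1_sig (constructive_indefinite_description _ (HF C)).
apply: (@tower_false F) => C; exact: (proj2_sig (constructive_indefinite_description _ (HF C))).
Qed.
End Zorn.
Local Open Scope ring_scope.
Set Implicit Arguments.

Section Ext.
Variables (k : fieldType) (H : lmodType k).
Variables (D : H -> Prop) (phi : H -> k).
Hypothesis g1 : forall c x y, D x -> D y -> D (c *: x + y).
Hypothesis g2 : forall c x y, D x -> D y -> phi (c *: x + y) = c * phi x + phi y.
Hypothesis D0 : D 0.

Lemma DZ c x : D x -> D (c *: x). Proof. by move=> Dx; rewrite -[_ *: x]addr0; apply: g1. Qed.
Lemma DD2 x y : D x -> D y -> D (x + y). Proof. by move=> Dx Dy; rewrite -[x]scale1r; apply: g1. Qed.
Lemma DN x : D x -> D (- x). Proof. by move=> Dx; rewrite -scaleN1r; apply: DZ. Qed.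

Variables (w : H) (t : k).
Hypothesis nDw : ~ D w.

Definition Dext x := exists d c, D d /\ x = d + c *: w.

Lemma ext_uniq d1 c1 d2 c2 : D d1 -> D d2 -> d1 + c1 *: w = d2 + c2 *: w -> d1 = d2 /\ c1 = c2.
Proof.
move=> D1 D2 E.
have E2 : (d1 - d2) + (c1 - c2) *: w = 0.
  by rewrite scalerBl addrACA -opprD E subrr.
case: (classic (c1 = c2)) => hc.
  split => //; move: E2; rewrite hc subrr scale0r addr0 => /eqP; rewrite subr_eq0 => /eqP //.
exfalso; apply: nDw.
have hc' : c1 - c2 != 0 by rewrite subr_eq0; apply/eqP.
have -> : w = (c1 - c2)^-1 *: (- (d1 - d2)).
  move/eqP: E2; rewrite addrC addr_eq0 => /eqP <-.
  by rewrite scalerA mulVf // scale1r.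
by apply: DZ; apply: DN; apply: DD2 => //; apply: DN.
Qed.

Definition phiext x := epsilon (inhabits (0 : k)) (fun a => exists d c, D d /\ x = d + c *: w /\ a = phi d + c * t).

Lemma phiext_key d c : D d -> phiext (d + c *: w) = phi d + c * t.
Proof.
move=> Dd.
have [d' [c' [Dd' [E Ea]]]] := epsilon_spec (inhabits (0 : k)) (fun a => exists d0 c0, D d0 /\ d + c *: w = d0 + c0 *: w /\ a = phi d0 + c0 * t) (ex_intro _ _ (ex_intro _ d (ex_intro _ c (conj Dd (conj erefl erefl))))).
apply: (eq_trans Ea); by have [-> ->] := ext_uniq c c' Dd Dd' E.
Qed.

Lemma Dext_cl c x y : Dext x -> Dext y -> Dext (c *: x + y).
Proof.
move=> [d1 [c1 [D1 ->]]] [d2 [c2 [D2 ->]]].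
exists (c *: d1 + d2), (c * c1 + c2); split; first exact: g1.
by rewrite scalerDr scalerA addrACA scalerDl.
Qed.

Lemma phiext_lin c x y : Dext x -> Dext y -> phiext (c *: x + y) = c * phiext x + phiext y.
Proof.
move=> [d1 [c1 [D1 ->]]] [d2 [c2 [D2 ->]]].
have -> : c *: (d1 + c1 *: w) + (d2 + c2 *: w) = (c *: d1 + d2) + (c * c1 + c2) *: w.
  by rewrite scalerDr scalerA addrACA scalerDl.
rewrite !phiext_key //; last exact: g1.
by rewrite g2 // mulrDr mulrA addrACA mulrDl.
Qed.

Lemma Dext_D x : D x -> Dext x.
Proof. by move=> Dx; exists x, 0; rewrite scale0r addr0. Qed.

Lemma phiext_D x : D x -> phiext x = phi x.
Proof. by move=> Dx; have := phiext_key 0 Dx; rewrite scale0r addr0 mul0r addr0. Qed.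

Lemma Dext_w : Dext w.
Proof. by exists 0, 1; rewrite scale1r add0r. Qed.
End Ext.

Section Sep.
Variables (k : fieldType) (H : lmodType k) (v : H).
Hypothesis hv : v <> 0.

Definition goodp (p : (H -> Prop) * (H -> k)) :=
  (forall c x y, p.1 x -> p.1 y -> p.1 (c *: x + y)) /\
  (forall c x y, p.1 x -> p.1 y -> p.2 (c *: x + y) = c * p.2 x + p.2 y) /\
  (p.1 v -> p.2 v = 1).
Definition TT := { p | goodp p }.
Definition DD (a : TT) := (proj1_sig a).1.
Definition PP (a : TT) := (proj1_sig a).2.
Definition RR (a b : TT) := (forall x, DD a x -> DD b x) /\ (forall x, DD a x -> PP b x = PP a x).

Lemma RRrefl a : RR a a. Proof. by split. Qed.
Lemma RRtrans a b c : RR a b -> RR b c -> RR a c.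
Proof.
move=> [h1 h2] [h3 h4]; split => x Hx; first by apply: h3; apply: h1.
by rewrite h4 ?h2 //; apply: h1.
Qed.

Lemma chain_ub_sep (C : TT -> Prop) : is_chain RR C -> exists u, forall c, C c -> RR c u.
Proof.
move=> HC.
pose DU x := exists a, C a /\ DD a x.
pose PU x := epsilon (inhabits (0 : k)) (fun c => exists a, C a /\ DD a x /\ PP a x = c).
have key : forall a x, C a -> DD a x -> PU x = PP a x.
  move=> a x Ca Dx.
  have [b [Cb [Db Eb]]] := epsilon_spec (inhabits (0 : k)) (fun c => exists a, C a /\ DD a x /\ PP a x = c) (ex_intro _ (PP a x) (ex_intro _ a (conj Ca (conj Dx erefl)))).
  apply: (eq_trans (esym Eb)).
  case: (HC a b Ca Cb) => [[_ h]|[_ h]]; [by rewrite h | by rewrite h].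
have gU : goodp (DU, PU).
  split; [|split] => /=.
  - move=> c x y [a [Ca Dx]] [b [Cb Dy]].
    case: (HC a b Ca Cb) => [[h _]|[h _]].
    + exists b; split => //; have [g1 _] := proj2_sig b; apply: g1 => //; exact: h.
    + exists a; split => //; have [g1 _] := proj2_sig a; apply: g1 => //; exact: h.
  - move=> c x y [a [Ca Dx]] [b [Cb Dy]].
    case: (HC a b Ca Cb) => [[h _]|[h _]].
    + have Dx' := h x Dx; have [g1 [g2 _]] := proj2_sig b.
      rewrite (key b x Cb Dx') (key b y Cb Dy) (key b _ Cb (g1 _ _ _ Dx' Dy)).
      exact: g2.
    + have Dy' := h y Dy; have [g1 [g2 _]] := proj2_sig a.
      rewrite (key a x Ca Dx) (key a y Ca Dy') (key a _ Ca (g1 _ _ _ Dx Dy')).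
      exact: g2.
  - move=> [a [Ca Dv]]; rewrite (key a v Ca Dv); have [_ [_ g3]] := proj2_sig a; exact: g3.
exists (exist _ (DU, PU) gU) => a Ca; split => x Dx /=.
- by exists a.
- exact: key.
Qed.

Lemma sep : exists phi : H -> k, lin_form phi /\ phi v = 1.
Proof.
have [m Hm] := zorn RRrefl RRtrans chain_ub_sep.
have [g1 [g2 g3]] := proj2_sig m.
rewrite -/(DD m) -/(PP m) in g1 g2 g3.
have gb : goodp ((fun x => x = 0), fun _ => 0 : k).
  split; [|split] => /=.
  - by move=> c x y -> ->; rewrite scaler0 addr0.
  - by move=> *; rewrite mulr0 addr0.
  - by move=> /hv.
have D0 : DD m 0.
  apply: NNPP => Hn.
  have Hempty : forall x, ~ DD m x.
    by move=> x Dx; apply: Hn; have := g1 (-1) x x Dx Dx; rewrite scaleN1r addNr.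
  have [h _] := Hm (exist _ _ gb) (conj (fun x Dx => False_ind _ (Hempty x Dx)) (fun x Dx => False_ind _ (Hempty x Dx))).
  by apply: Hn; apply: h.
have phi0 : PP m 0 = 0.
  have := g2 1 0 0 D0 D0; rewrite scale1r addr0 mul1r => E.
  have /addrI E2 : PP m 0 + 0 = PP m 0 + PP m 0 by rewrite addr0.
  by rewrite -E2.
have extend : forall w t, ~ DD m w -> (@Dext _ H (DD m) w v -> @phiext _ H (DD m) (PP m) w t v = 1) -> False.
  move=> w t nDw Hv.
  have gE : goodp (@Dext _ H (DD m) w, @phiext _ H (DD m) (PP m) w t).
    split; [|split] => /=.
    - by move=> c x y; apply: (@Dext_cl _ H _ g1).
    - by move=> c x y; apply: (@phiext_lin _ H _ (PP m) g1 g2 D0 w t nDw).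
    - exact: Hv.
  have [h _] := Hm (exist _ _ gE) (conj (fun x Dx => @Dext_D _ H _ w x Dx) (fun x Dx => @phiext_D _ H _ (PP m) g1 D0 w t nDw x Dx)).
  by apply: nDw; apply: h; apply: (@Dext_w _ H _ D0).
have Dv : DD m v.
  apply: NNPP => nDv; apply: (extend v 1 nDv) => _.
  have := @phiext_key _ H _ (PP m) g1 D0 v 1 nDv 0 1 D0; rewrite scale1r add0r phi0 mul1r add0r; exact.
have Dall : forall w, DD m w.
  move=> w; apply: NNPP => nDw; apply: (extend w 0 nDw) => _.
  have := @phiext_key _ H _ (PP m) g1 D0 w 0 nDw v 0 Dv; rewrite scale0r addr0 mulr0 addr0 => ->; exact: g3.
exists (PP m); split; last exact: g3.
by move=> c x y; apply: g2.
Qed.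
End Sep.

Set Implicit Arguments.
Section Lin.
Variables (k : fieldType) (H : lmodType k).

Lemma lf0 (phi : H -> k) : lin_form phi -> phi 0 = 0.
Proof.
move=> l; have := l 1 0 0; rewrite scale1r addr0 mul1r => E.
have /addrI E2 : phi 0 + 0 = phi 0 + phi 0 by rewrite addr0.
by rewrite -E2.
Qed.
Lemma lfD (phi : H -> k) x y : lin_form phi -> phi (x + y) = phi x + phi y.
Proof. by move=> l; have := l 1 x y; rewrite scale1r mul1r. Qed.
Lemma lfZ (phi : H -> k) c x : lin_form phi -> phi (c *: x) = c * phi x.
Proof. by move=> l; have := l c x 0; rewrite addr0 lf0 // addr0. Qed.
Lemma lfB (phi : H -> k) x y : lin_form phi -> phi (x - y) = phi x - phi y.
Proof. by move=> l; rewrite lfD // -scaleN1r lfZ // mulN1r. Qed.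
Lemma lf_sum (phi : H -> k) (T : Type) (s : seq T) (F : T -> H) : lin_form phi ->
  phi (\sum_(p <- s) F p) = \sum_(p <- s) phi (F p).
Proof.
move=> l; elim: s => [|a s IH]; first by rewrite !big_nil lf0.
by rewrite !big_cons lfD // IH.
Qed.

Lemma bilin_prod (phi psi : H -> k) : lin_form phi -> lin_form psi ->
  bilin_form (fun x y => phi x * psi y).
Proof.
move=> l1 l2; split => c x y z.
- by rewrite l1 mulrDl mulrA.
- by rewrite l2 mulrDr !mulrA (mulrC (phi z) c).
Qed.

Lemma bilin_flip (f : H -> H -> k) : bilin_form f -> bilin_form (fun x y => f y x).
Proof. by move=> [h1 h2]; split => *; [rewrite h2|rewrite h1]. Qed.

Lemma bf0l (f : H -> H -> k) y : bilin_form f -> f 0 y = 0.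
Proof.
move=> [h1 _]; have := h1 1 0 0 y; rewrite scale1r addr0 mul1r => E.
have /addrI E2 : f 0 y + 0 = f 0 y + f 0 y by rewrite addr0.
by rewrite -E2.
Qed.
Lemma bf0r (f : H -> H -> k) y : bilin_form f -> f y 0 = 0.
Proof. by move=> b; apply: (bf0l y (bilin_flip b)). Qed.
Lemma bfZl (f : H -> H -> k) c x y : bilin_form f -> f (c *: x) y = c * f x y.
Proof. by move=> b; rewrite -[c *: x]addr0 (proj1 b) bf0l // addr0. Qed.
Lemma bfZr (f : H -> H -> k) c x y : bilin_form f -> f y (c *: x) = c * f y x.
Proof. by move=> b; rewrite -[c *: x]addr0 (proj2 b) bf0r // addr0. Qed.

Lemma vec_eq (a b : H) : (forall phi : H -> k, lin_form phi -> phi a = phi b) -> a = b.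
Proof.
move=> h; apply: NNPP => nab.
have nz : a - b <> 0 by move/eqP; rewrite subr_eq0 => /eqP.
have [phi [l p1]] := @sep _ H (a - b) nz.
move: p1; rewrite lfB // h // subrr => /eqP; by rewrite eq_sym oner_eq0.
Qed.
End Lin.

Section Main.
Variables (k : fieldType) (H : lmodType k)
    (Delta : H -> seq (H * H)) (eps : H -> k) (M : H -> H -> H) (one : H)
    (Phi Phiinv : H -> H -> H -> k) (S : H -> H) (alpha beta : H -> k).
Hypothesis HM : majid_algebra Delta eps M one Phi Phiinv S alpha beta.
Hypothesis Hcc : cocommutative Delta.

Lemma sw2_0 (f : H -> H -> k) : bilin_form f -> sw2 Delta 0 f = 0.
Proof.
move=> b; have := Delta_lin HM b 1 0 0; rewrite scale1r addr0 mul1r => E.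
have /addrI E2 : sw2 Delta 0 f + 0 = sw2 Delta 0 f + sw2 Delta 0 f by rewrite addr0.
by rewrite -E2.
Qed.

Lemma sw2_Z (f : H -> H -> k) c x : bilin_form f -> sw2 Delta (c *: x) f = c * sw2 Delta x f.
Proof. by move=> b; have := Delta_lin HM b c x 0; rewrite addr0 sw2_0 // addr0. Qed.

Lemma eps_one_gl : grouplike Delta eps one.
Proof. split; [exact: one_Delta HM | exact: one_eps HM]. Qed.

Lemma one_neq0 : one <> 0.
Proof.
move=> E; have := one_eps HM; rewrite E lf0; last exact: eps_lin HM.
by move/eqP; rewrite eq_sym oner_eq0.
Qed.

Lemma arrow_loop g h : has_arrow Delta eps g h -> g = h.
Proof.
move=> [Gg [Gh [x [Hsp Hn]]]]; apply: NNPP => neq.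
have gh0 : g - h <> 0 by move/eqP; rewrite subr_eq0 => /eqP.
have [phi [lphi p1]] := @sep _ H (g - h) gh0.
apply: Hn; exists (phi x); apply: vec_eq => psi lpsi.
have bf := bilin_prod lphi lpsi.
have := Hcc x bf; rewrite /sw2 (Hsp _ bf) (Hsp _ (bilin_flip bf)) !big_cons !big_nil /= !addr0 => E.
rewrite lfZ // lfB // mulrBr.
move: p1; rewrite lfB // => p1.
have -> : psi x = phi g * psi x - phi h * psi x by rewrite -mulrBl p1 mul1r.
have -> : phi g * psi x - phi h * psi x = (phi g * psi x + phi x * psi h) - (phi h * psi x + phi x * psi h).
  by rewrite opprD addrACA subrr addr0.
rewrite E (addrC (phi h * psi x)) opprD addrACA subrr addr0.
by rewrite (mulrC (phi x) (psi g)) (mulrC (phi x)).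
Qed.

Hypothesis Hqc : quiver_connected Delta eps.

Lemma gl_one g : grouplike Delta eps g -> g = one.
Proof.
move=> Gg; have Hq := Hqc Gg eps_one_gl.
elim: Hq => [x y /arrow_loop //| x // | x y _ -> // | x y z _ -> _ -> //].
Qed.

Hypothesis Hpt : pointed Delta.

Lemma coef (g : H) (C : H -> Prop) (s : seq (H * H)) :
  (forall x, C x <-> exists c : k, x = c *: g) ->
  (forall p, p \in s -> C p.1 /\ C p.2) ->
  exists lam : k, forall f, bilin_form f -> \sum_(p <- s) f p.1 p.2 = lam * f g g.
Proof.
move=> HC; elim: s => [|p s IH] Hin.
  by exists 0 => f _; rewrite big_nil mul0r.
have [lam Hl] : exists lam : k, forall f, bilin_form f -> \sum_(p <- s) f p.1 p.2 = lam * f g g.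
  by apply: IH => q Hq; apply: Hin; rewrite inE Hq orbT.
have [C1 C2] := Hin p (mem_head _ _).
have [a Ea] := (proj1 (HC _)) C1; have [b Eb] := (proj1 (HC _)) C2.
exists (a * b + lam) => f bf.
by rewrite big_cons Hl // Ea Eb bfZl // bfZr // mulrDl mulrA.
Qed.

Lemma simple_one C : simple_subcoalgebra Delta C -> forall x, C x <-> exists c : k, x = c *: one.
Proof.
move=> Hs; have [g [g0 HgC]] := Hpt Hs.
have [[Hsub Hco] _] := Hs.
have Cg : C g by apply/HgC; exists 1; rewrite scale1r.
have [s [Hin Hteq]] := Hco g Cg.
have [lam Hl] := coef g C s HgC Hin.
have Hsw : forall f, bilin_form f -> sw2 Delta g f = lam * f g g.
  by move=> f bf; rewrite /sw2 Hteq // Hl.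
have leps : lam * eps g = 1.
  have [psi [lpsi p1]] := @sep _ H g g0.
  have := congr1 psi (counit_l HM g).
  rewrite /sw2 lf_sum //.
  have bf := bilin_prod (eps_lin HM) lpsi.
  under eq_bigr do rewrite lfZ //.
  rewrite -/(sw2 Delta g (fun x y => eps x * psi y)) Hsw // p1 mulr1 => ->.
  done.
have lam0 : lam != 0 by apply/eqP => l0; move: leps; rewrite l0 mul0r => /eqP; rewrite eq_sym oner_eq0.
have gl : grouplike Delta eps (lam *: g).
  split.
  - move=> f bf; rewrite -/(sw2 Delta (lam *: g) f) sw2_Z // Hsw // big_cons big_nil addr0 /=.
    by rewrite bfZl // bfZr // mulrA.
  - by rewrite lfZ //; exact: eps_lin HM.
have E1 := gl_one gl.
move=> x; split.
- move/HgC => [c ->]; exists (c / lam); rewrite -E1 scalerA divfK //.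
- move=> [c ->]; apply/HgC; exists (c * lam); by rewrite -E1 scalerA.
Qed.

Definition C1 := fun x : H => exists c : k, x = c *: one.

Lemma C1_simple : simple_subcoalgebra Delta C1.
Proof.
have sub1 : subspace C1.
  split; first by exists 0; rewrite scale0r.
  by move=> c x y [a ->] [b ->]; exists (c * a + b); rewrite scalerDl scalerA.
split; [split|split].
- exact: sub1.
- move=> x [c ->]; exists [:: (c *: one, one)]; split.
    by move=> p; rewrite inE => /eqP ->; split; [exists c | exists 1; rewrite scale1r].
  move=> f bf; rewrite -/(sw2 Delta (c *: one) f) sw2_Z // /sw2 (one_Delta HM) //.
  by rewrite !big_cons !big_nil !addr0 /= bfZl.
- by exists one; split; [exists 1; rewrite scale1r | exact: one_neq0].
- move=> D [[D0 Dcl] _] HDC; case: (classic (exists x, D x /\ x <> 0)) => [[x [Dx nx]]|nn].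
  + right; have [c Ec] := HDC x Dx.
    have c0 : c != 0 by apply/eqP => c0; apply: nx; rewrite Ec c0 scale0r.
    have Done : D one.
      have := Dcl c^-1 x 0 Dx D0; by rewrite addr0 Ec scalerA mulVf // scale1r.
    move=> y [a ->]; have := Dcl a one 0 Done D0; by rewrite addr0.
  + left => x Dx; apply: NNPP => nx; apply: nn; by exists x.
Qed.
End Main.
Unset Implicit Arguments.

Theorem mainTheorem7 (k : fieldType) (H : lmodType k)
    (Delta : H -> seq (H * H)) (eps : H -> k) (M : H -> H -> H) (one : H)
    (Phi Phiinv : H -> H -> H -> k) (S : H -> H) (alpha beta : H -> k) :
  majid_algebra Delta eps M one Phi Phiinv S alpha beta ->
  cocommutative Delta ->
  pointed Delta ->
  quiver_connected Delta eps ->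
  (forall g, grouplike Delta eps g -> g = one) /\
  (forall x, coradical Delta x <-> exists c : k, x = c *: one).
Proof.
move=> HM Hcc Hpt Hqc; split.
- move=> g Gg; eapply gl_one; eauto.
- move=> x; split.
  + move=> [s [Hs ->]]; elim: s Hs => [|y s IH] Hs.
      by exists 0; rewrite big_nil scale0r.
    have [C [sC Cy]] := Hs y (mem_head _ _).
    have [a Ea] : exists a : k, y = a *: one.
      by apply: (proj1 (simple_one HM Hcc Hqc Hpt sC y)).
    have [b Eb] : exists b : k, \sum_(z <- s) z = b *: one.
      by apply: IH => z hz; apply: Hs; rewrite inE hz orbT.
    by exists (a + b); rewrite big_cons Ea Eb scalerDl.
  + move=> [c ->]; exists [:: c *: one]; split; last by rewrite big_seq1.
    move=> y; rewrite inE => /eqP ->; exists (@C1 _ H one); split; last by exists c.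
    exact: (C1_simple HM).
Qed.
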